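(* Let $P(x)=\sum_{I\in\mathcal{I}}a_Ix^I$ be a polynomial in $x=(x_1,\dots,x_n)$, $n\ge2$, with $\mathcal{I}\subset\mathbb{N}^n$ finite containing all $I$ with $|I|\le1$, $a_I>0$ on $\mathcal{I}$, $a_I=1$ for $|I|\le1$, which solves $$\frac{\det\Big[\big(P\,\partial_{\alpha}\partial_{\beta}P-\partial_\alpha P\,\partial_\beta P\big)x_\alpha+P\,\partial_\alpha P\,\delta_{\alpha\beta}\Big]_{1\le\alpha,\beta\le n}}{P^{n-1}}=P^{n}.$$ Then for each $i$ there are $k_i\in\mathbb{Z}^+$ and, for each $j\neq i$, $h_{ij}\in\mathbb{N}$ such that, writing $te_i$ for the point with $i$-th coordinate $t$ and other coordinates $0$, $$P(te_i)=\Big(1+\frac{t}{k_i}\Big)^{k_i},\qquad \partial_jP(te_i)=\Big(1+\frac{t}{k_i}\Big)^{h_{ij}}\ (j\ne i),$$ and moreover $\sum_{\alpha\neq i}h_{i\alpha}=k_i(n-2)+2$ for every $i$, and $\frac{h_{ij}}{k_i}=\frac{h_{ji}}{k_j}$ for all $i\neq j$.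
   Context: $\partial_\alpha=\partial/\partial x_\alpha$, $x^I=\prod_\alpha x_\alpha^{I_\alpha}$, $|I|=\sum_\alpha I_\alpha$. *)

(* Defs.v *)
From HB Require Import structures.
From mathcomp Require Import all_boot all_order all_algebra.
From mathcomp Require Import mpoly.
From mathcomp Require Import reals.
Set Implicit Arguments. Unset Strict Implicit. Unset Printing Implicit Defensive.
Import Order.TTheory GRing.Theory Num.Theory.
Local Open Scope ring_scope.

Definition lemma7_mx (R : realType) (n : nat) (P : {mpoly R[n]}) : 'M[{mpoly R[n]}]_n :=
  \matrix_(a < n, b < n)
    ((P * (mderiv b (mderiv a P)) - mderiv a P * mderiv b P) * 'X_a
     + (if a == b then P * mderiv a P else 0)).

Definition axis_pt (R : realType) (n : nat) (i : 'I_n) (t : R) : 'I_n -> R :=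
  fun j => if j == i then t else 0.

(* Main.v *)
Require Import Defs.
From HB Require Import structures.
From mathcomp Require Import all_boot all_order all_algebra.
From mathcomp Require Import mpoly.
From mathcomp Require Import reals.
From mathcomp Require Import ring lra zify fingroup perm.
From Stdlib Require Import Classical.
Import Order.TTheory GRing.Theory Num.Theory.
Local Open Scope ring_scope.

Set Implicit Arguments. Unset Strict Implicit. Unset Printing Implicit Defensive.

Section Univ.
Variable R : numFieldType.
Implicit Types (p q f g : {poly R}).

Definition Dop f : {poly R} :=
  'X * (f * f^`()^`() - f^`() ^+ 2) + f * f^`().

Lemma DopM a b : Dop (a * b) = b ^+ 2 * Dop a + a ^+ 2 * Dop b.
Proof. rewrite /Dop !derivM !derivD !derivM. ring. Qed.

Lemma DopX a m : Dop (a ^+ m.+1) = m.+1%:R * a ^+ (2 * m) * Dop a.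
Proof.
elim: m => [|m IH]; first by rewrite expr1 muln0 expr0 mulr1 mul1r.
rewrite exprS DopM IH.
have e1 : (a ^+ m.+1) ^+ 2 = a ^+ (2 * m) * a ^+ 2.
  by rewrite -exprM -exprD; congr (_ ^+ _); lia.
have e2 : a ^+ (2 * m.+1) = a ^+ (2 * m) * a ^+ 2.
  by rewrite -exprD; congr (_ ^+ _); lia.
rewrite e1 e2 -[m.+2]addn1 natrD. ring.
Qed.

Lemma size_deriv_num p : size p^`() = (size p).-1.
Proof.
rewrite /deriv; case sp: (size p) => [|[|k]] /=.
- apply/eqP; rewrite size_poly_eq0; apply/eqP/polyP => i.
  by rewrite coef_poly coef0.
- apply/eqP; rewrite size_poly_eq0; apply/eqP/polyP => i.
  by rewrite coef_poly coef0.
- rewrite size_poly_eq // mulrn_eq0 negb_or /=.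
  have : p`_(size p).-1 != 0 by rewrite -lead_coefE lead_coef_eq0 -size_poly_gt0 sp.
  by rewrite sp.
Qed.

Lemma irr_prime p a b : irreducible_poly p -> p %| a * b -> (p %| a) || (p %| b).
Proof.
move=> ip; case pa: (p %| a) => //= hab.
have cop : coprimep p a.
  rewrite coprimep_def size_poly_eq1.
  case: (irredp_XsubCP ip (dvdp_gcdl p a)) => // gp.
  have : p %| gcdp p a by rewrite (eqp_dvdr _ gp) dvdpp.
  by move=> /dvdp_trans /(_ (dvdp_gcdr p a)); rewrite pa.
by rewrite -(Gauss_dvdpr _ cop).
Qed.

Lemma irr_dvd_exp p a k : irreducible_poly p -> p %| a ^+ k -> p %| a.
Proof.
move=> ip; elim: k => [|k IH]; first by rewrite expr0 dvdp1 => /eqP h; case: ip; rewrite h.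
by rewrite exprS => /(irr_prime ip) /orP [] // /IH.
Qed.

Lemma irr_exists p : (1 < size p)%N -> exists q, irreducible_poly q /\ q %| p.
Proof.
move: {2}(size p) (leqnn (size p)) => k; elim: k p => [|k IH] p hs hp.
  by move: hp; rewrite leqNgt (leq_ltn_trans hs).
case: (classic (irreducible_poly p)) => [ip|nip]; first by exists p; split.
have [q [sq [qp nqp]]] : exists q, size q != 1%N /\ q %| p /\ ~ (q %= p).
  apply: NNPP => H; apply: nip; split => // q sq qp.
  apply: NNPP => nq; apply: H; by exists q.
have p0 : p != 0 by rewrite -size_poly_gt0 (ltn_trans _ hp).
have q0 : q != 0 by apply: contraNneq p0 => q0; move: qp; rewrite q0 dvd0p.
have sqp : (size q < size p)%N.
  rewrite ltn_neqAle dvdp_leq // andbT (dvdp_size_eqp qp); exact/negP.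
have sq2 : (1 < size q)%N.
  by rewrite ltn_neqAle eq_sym sq /= size_poly_gt0.
have [r [ir rq]] := IH q (leq_trans (leq_trans sqp hs) (leqnn _)) sq2.
  exists r; split => //; exact: dvdp_trans rq qp.
Qed.
Lemma mult_exists p f : (1 < size p)%N -> f != 0 ->
  exists m q, f = p ^+ m * q /\ ~~ (p %| q).
Proof.
move=> sp; move: {2}(size f) (leqnn (size f)) => k; elim: k f => [|k IH] f hs f0.
  by move: hs; rewrite leqn0 size_poly_eq0 (negPf f0).
case pf: (p %| f); last by exists 0%N, f; rewrite expr0 mul1r pf.
have p0 : p != 0 by rewrite -size_poly_gt0 (ltn_trans _ sp).
have hf : f = f %/ p * p by rewrite divpK.
have q0 : f %/ p != 0 by apply: contraNneq f0 => q0; rewrite hf q0 mul0r.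
have sq : leq (size (f %/ p)) k.
  move: hs; rewrite {1}hf size_mul // => h.
  have : leq (size (f %/ p)).+1 (size (f %/ p) + size p).-1.
    by rewrite -subn1 -addnBA ?(ltnW sp) // -[X in (X < _)%N]addn0 ltn_add2l subn_gt0.
  by move=> h2; rewrite -ltnS (leq_trans h2 h).
have [m [q [hq nq]]] := IH _ sq q0.
by exists m.+1, q; rewrite hf hq exprS; split => //; ring.
Qed.

Lemma size2E p : (size p <= 2)%N -> p = p`_1 *: 'X + (p`_0)%:P.
Proof.
move=> sp; apply/polyP => i; rewrite coefD coefZ coefX coefC.
case: i => [|[|i]] /=; rewrite ?mulr0 ?add0r ?addr0 ?mulr1 //.
by rewrite nth_default // (leq_trans sp).
Qed.

Definition ell (k : nat) : {poly R} := (k%:R)^-1 *: ('X + (k%:R)%:P).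

Lemma ell_horner k t : (0 < k)%N -> (ell k).[t] = 1 + t / k%:R.
Proof.
move=> k0; have kn : (k%:R : R) != 0 by rewrite pnatr_eq0 -lt0n.
rewrite /ell hornerZ hornerD hornerX hornerC; field; exact: kn.
Qed.

Lemma size_ell k : (0 < k)%N -> size (ell k) = 2%N.
Proof.
move=> k0; have kn : (k%:R : R) != 0 by rewrite pnatr_eq0 -lt0n.
by rewrite size_scale ?invr_eq0 // size_XaddC.
Qed.

Lemma ell_neq0 k : (0 < k)%N -> ell k != 0.
Proof. by move=> k0; rewrite -size_poly_gt0 size_ell. Qed.

Lemma size_ell_exp k h : (0 < k)%N -> size (ell k ^+ h) = h.+1.
Proof.
move=> k0; have := size_exp (ell k) h; rewrite size_ell //= mul1n => e.
by rewrite -[in RHS]e prednK // lt0n size_poly_eq0 expf_neq0 // ell_neq0.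
Qed.

Lemma Dop_ell k : (0 < k)%N -> Dop (ell k) = (k%:R)^-1%:P.
Proof.
move=> k0; have kn : (k%:R : R) != 0 by rewrite pnatr_eq0 -lt0n.
rewrite /Dop /ell -mul_polyC.
set u := _%:P; set c := (k%:R)%:P.
have hu : u * c = 1 by rewrite -polyCM mulVf.
have du : u^`() = 0 by rewrite derivC.
have dc : c^`() = 0 by rewrite derivC.
have dX : (GRing.one _ : {poly R})^`() = 0 by rewrite derivC.
rewrite !derivM !derivD du dc derivX !derivM !derivD du dc derivX dX.
transitivity (u * (u * c)); last by rewrite hu mulr1.
ring.
Qed.
Lemma not_dvd_const p c : (1 < size p)%N -> c != 0 -> ~~ (p %| c%:P).
Proof.
move=> sp c0; apply/negP => h.
have := dvdp_leq _ h; rewrite polyC_eq0 c0 size_polyC c0 => /(_ isT) h2.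
by move: (leq_ltn_trans h2 sp); rewrite ltnn.
Qed.

Lemma not_dvd_deriv p : (1 < size p)%N -> ~~ (p %| p^`()).
Proof.
move=> sp; have d0 : p^`() != 0.
  by rewrite -size_poly_gt0 size_deriv_num -subn1 subn_gt0.
apply/negP => h; have := dvdp_leq d0 h; rewrite size_deriv_num.
by case: (size p) sp => // m _; rewrite ltnn.
Qed.

Lemma univ_shape f G N : (2 <= N)%N -> f.[0] = 1 -> f^`().[0] = 1 ->
  G * Dop f = f ^+ N -> exists k, (0 < k)%N /\ f = ell k ^+ k.
Proof.
move=> N2 hf0 hf'0 hG.
have f0 : f != 0 by apply: contra_eq_neq hf0 => ->; rewrite horner0 eq_sym oner_neq0.
have fsz : (1 < size f)%N.
  rewrite ltnNge; apply/negP => /size1_polyC hf.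
  by move: hf'0; rewrite hf derivC horner0 => /eqP; rewrite eq_sym oner_eq0.
set g := gcdp f f^`().
have g0 : g != 0 by rewrite gcdp_eq0 negb_and f0.
set r := f %/ g; set M := f^`() %/ g.
have hf : f = r * g by rewrite divpK // dvdp_gcdl.
have hf' : f^`() = M * g by rewrite divpK // dvdp_gcdr.
have copRM : coprimep r M by apply: coprimep_div_gcd; rewrite f0.
have r0 : r != 0 by apply: contraNneq f0 => r0; rewrite hf r0 mul0r.
set N0 := ('X * M)^`() * r - 'X * M * r^`().
have hD : Dop f = g ^+ 2 * N0.
  have H : r^`() * g + r * g^`() = M * g by rewrite -derivM -hf.
  rewrite /Dop hf' derivM; apply/eqP; rewrite -subr_eq0.
  have -> : 'X * (f * (M^`() * g + M * g^`()) - (M * g) ^+ 2) + f * (M * g) - g ^+ 2 * N0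
     = 'X * M * g * (r^`() * g + r * g^`() - M * g).
    rewrite /N0 hf !derivM derivX; ring.
  by rewrite H subrr mulr0.
have X0 : ~~ ('X %| f) by rewrite -['X]subr0 dvdp_XsubCl /root hf0 oner_eq0.
have loc : forall p, irreducible_poly p -> p %| f -> ~~ (p %| N0) /\ p %| r.
  move=> p ip pf; have sp : (1 < size p)%N by case: ip.
  have p0 : p != 0 by apply: irredp_neq0.
  have [m [q [hfq nq]]] := mult_exists sp f0.
  case: m hfq => [|m] hfq; first by move: nq; rewrite -(mul1r q) -(expr0 p) -hfq pf.
  set V := m.+1%:R * p^`() * q + p * q^`().
  have hfd : f^`() = p ^+ m * V.
    rewrite hfq derivM deriv_exp /= -mulr_natr /V exprS; ring.
  have pmg : p ^+ m %| g.
    rewrite dvdp_gcd hfd (dvdp_mulIl (p ^+ m) V) andbT hfq exprSr -mulrA.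
    by apply: dvdp_mulIl.
  set g' := g %/ p ^+ m.
  have hg : g = p ^+ m * g' by rewrite divpKC.
  have pm0 : p ^+ m != 0 by rewrite expf_neq0.
  have nV : ~~ (p %| V).
    rewrite /V dvdp_addl; last exact: dvdp_mulIl.
    apply/negP => /(irr_prime ip) /orP [] h.
      move: h => /(irr_prime ip) /orP [] h.
        by have := not_dvd_const sp (c := m.+1%:R); rewrite pnatr_eq0 polyC_natr h => /(_ isT).
      by move: (not_dvd_deriv sp); rewrite h.
    by move: nq; rewrite h.
  have ng' : ~~ (p %| g').
    apply/negP => pg'.
    have : p ^+ m * p %| f^`().
      apply: dvdp_trans (dvdp_gcdr f f^`()); rewrite -/g hg dvdp_mul2l //.
    by rewrite hfd dvdp_mul2l // (negPf nV).
  have Dp : Dop f = p ^+ (2 * m) * (m.+1%:R * q ^+ 2 * Dop p + p ^+ 2 * Dop q).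
    rewrite hfq DopM DopX.
    have -> : (p ^+ m.+1) ^+ 2 = p ^+ (2 * m) * p ^+ 2.
      by rewrite -exprM -exprD; congr (_ ^+ _); lia.
    ring.
  set B := _ + _ in Dp.
  have nB : ~~ (p %| B).
    rewrite /B dvdp_addl; last by apply: dvdp_mulr; rewrite expr2 dvdp_mulIl.
    have -> : m.+1%:R * q ^+ 2 * Dop p
       = p * (m.+1%:R * q ^+ 2 * ('X * p^`()^`() + p^`())) - m.+1%:R * q ^+ 2 * 'X * p^`() ^+ 2.
      rewrite /Dop; ring.
    rewrite dvdp_addr ?dvdp_mulIl // dvdpNr.
    apply/negP => /(irr_prime ip) /orP [] h; last first.
      by move: (not_dvd_deriv sp); rewrite (irr_dvd_exp ip h).
    move: h => /(irr_prime ip) /orP [] h; last first.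
      have : 'X %| f.
        have pX : p %= 'X.
          rewrite -dvdp_size_eqp // eqn_leq (dvdp_leq _ h) ?polyX_eq0 //= size_polyX.
          exact: sp.
        by rewrite -(eqp_dvdl _ pX).
      by rewrite (negPf X0).
    move: h => /(irr_prime ip) /orP [] h; last by move: nq; rewrite (irr_dvd_exp ip h).
    by have := not_dvd_const sp (c := m.+1%:R); rewrite pnatr_eq0 polyC_natr h => /(_ isT).
  split.
    apply/negP => pN.
    have : B = g' ^+ 2 * N0.
      apply: (mulfI (x := p ^+ (2 * m))); first by rewrite expf_neq0.
      rewrite -Dp hD hg.
      have -> : p ^+ (2 * m) = (p ^+ m) ^+ 2 by rewrite -exprM mulnC.
      ring.
    by move=> eB; move: nB; rewrite eB dvdp_mull.
  have : r * g' = p * q.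
    by apply: (mulfI pm0); rewrite mulrCA -hg -hf hfq mulrA -exprSr.
  move=> e; have : p %| r * g' by rewrite e dvdp_mulIl.
  by move=> /(irr_prime ip) /orP [] // h; move: ng'; rewrite h.
have N00 : N0 != 0.
  apply: contra_eq_neq hG => N00; rewrite hD N00 mulr0 mulr0 eq_sym.
  by rewrite expf_neq0.
have N0c : (size N0 <= 1)%N.
  rewrite leqNgt; apply/negP => /irr_exists [p [ip pN]].
  have pf : p %| f.
    apply: (irr_dvd_exp (k := N)) => //; rewrite -hG hD.
    by apply: dvdp_mull; apply: dvdp_mull.
  by have [] := loc p ip pf; rewrite pN.
have dN0 : N0^`() = 0 by rewrite (size1_polyC N0c) derivC.
have e1 : r %| 'X * M * r^`()^`().
  have : N0^`() = ('X * M)^`()^`() * r - 'X * M * r^`()^`().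
    rewrite /N0 derivB !derivM; ring.
  rewrite dN0 => /eqP; rewrite eq_sym subr_eq0 => /eqP <-.
  exact: dvdp_mulIr.
have cop : coprimep r ('X * M).
  rewrite coprimepMr copRM andbT coprimepX.
  apply/negP => /rootP h; move: hf0; rewrite hf hornerM h mul0r => /eqP.
  by rewrite eq_sym oner_eq0.
have r2 : r^`()^`() = 0.
  move: e1; rewrite mulrC Gauss_dvdpl // => h.
  apply/eqP; apply: contraT => h0; move: (dvdp_leq h0 h).
  rewrite !size_deriv_num; have : size r != 0%N by rewrite size_poly_eq0.
  by case: (size r) => [|[|s]] //= _; rewrite ltnNge ltnW.
have sr2 : (size r <= 2)%N.
  move: r2 => /eqP; rewrite -size_poly_eq0 !size_deriv_num.
  by case: (size r) => [|[|[|s]]].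
have allr : forall p, irreducible_poly p -> p %| f -> p %= r.
  move=> p ip pf; have [_ pr] := loc p ip pf.
  rewrite -dvdp_size_eqp // eqn_leq dvdp_leq //=.
  by case: ip => sp _; apply: leq_trans sr2 sp.
have [p0 [ip0 pf0]] := irr_exists fsz.
have sr : size r = 2%N.
  apply/eqP; rewrite eqn_leq sr2 /=.
  by rewrite (leq_trans ip0.1) // dvdp_leq // (loc p0 ip0 pf0).2.
have sr1 : (1 < size r)%N by rewrite sr.
have [k [q [hfq nq]]] := mult_exists sr1 f0.
have q0 : q != 0 by apply: contraNneq f0 => q0; rewrite hfq q0 mulr0.
have sq : (size q <= 1)%N.
  rewrite leqNgt; apply/negP => /irr_exists [p [ip pq]].
  have pf : p %| f by rewrite hfq dvdp_mull.
  by move: nq; rewrite -(eqp_dvdl _ (allr p ip pf)) pq.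
set c := q`_0; have hq : q = c%:P by apply: size1_polyC.
have hr : r = r`_1 *: 'X + (r`_0)%:P by apply: size2E; rewrite sr.
set a := r`_1 in hr; set b := r`_0 in hr.
case: k hfq => [|k] hfq.
  by move: fsz; rewrite hfq expr0 mul1r hq size_polyC; case: (c != 0).
exists k.+1; split => //.
have kn : (k.+1%:R : R) != 0 by rewrite pnatr_eq0.
have e0 : b ^+ k.+1 * c = 1.
  by rewrite -hf0 hfq hq hornerM hornerC horner_exp hr hornerD hornerZ hornerX hornerC mulr0 add0r.
have e1' : k.+1%:R * a * b ^+ k * c = 1.
  rewrite -[RHS]hf'0 hfq hq derivM derivC mulr0 addr0 deriv_exp hr derivD derivZ derivX derivC.
  rewrite addr0 /= alg_polyC hornerM hornerC hornerMn hornerM hornerC horner_exp hornerD hornerZ hornerX hornerC mulr0 add0r.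
  rewrite -mulr_natr; ring.
have hb : b = k.+1%:R * a.
  transitivity (b * (k.+1%:R * a * b ^+ k * c)); first by rewrite e1' mulr1.
  transitivity (k.+1%:R * a * (b ^+ k.+1 * c)); first by rewrite exprS; ring.
  by rewrite e0 mulr1.
have hr' : r = b%:P * ell k.+1.
  rewrite hr /ell mul_polyC scalerA scalerDr -!mul_polyC -!polyCM hb mulrAC mulfV // mul1r.
  by rewrite [a * _]mulrC.
rewrite hfq hr' hq exprMn -polyC_exp mulrAC -polyCM e0 mul1r //.
Qed.
Lemma ell0 k : (0 < k)%N -> (ell k).[0] = 1.
Proof. by move=> k0; rewrite ell_horner // mul0r addr0. Qed.

Lemma univ_full f G N : (2 <= N)%N -> f.[0] = 1 -> f^`().[0] = 1 ->
  G * Dop f = f ^+ N ->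
  [/\ (0 < (size f).-1)%N, f = ell (size f).-1 ^+ (size f).-1 &
      G = ell (size f).-1 ^+ ((size f).-1 * (N - 2) + 2)].
Proof.
move=> N2 h0 h1 hG; have [k [k0 hf]] := univ_shape N2 h0 h1 hG.
have -> : (size f).-1 = k by rewrite hf size_ell_exp.
split => //; move: hG; rewrite hf.
case: k k0 hf => // k _ hf.
have kn : (k.+1%:R : R) != 0 by rewrite pnatr_eq0.
rewrite DopX Dop_ell // -polyC_natr mulrAC -polyCM mulfV // mul1r -exprM => hG.
apply: (mulIf (x := ell k.+1 ^+ (2 * k))); first by rewrite expf_neq0 // ell_neq0.
by rewrite hG -exprD; congr (_ ^+ _); nia.
Qed.

Lemma dvd_ell k K g : (0 < k)%N -> g %| ell k ^+ K -> g.[0] = 1 ->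
  g = ell k ^+ (size g).-1.
Proof.
move=> k0 gd g0.
have kn : (k%:R : R) != 0 by rewrite pnatr_eq0 -lt0n.
have eX : ell k %= 'X - (- k%:R)%:P.
  by rewrite /ell polyCN opprK eqp_scale // invr_eq0.
have : g %| ('X - (- k%:R)%:P) ^+ K by rewrite -(eqp_dvdr _ (eqp_exp K eX)).
move=> /dvdp_exp_XsubCP [h _ gh].
have gq : g %= ell k ^+ h by rewrite (eqp_trans gh) // eqp_sym eqp_exp.
have q0 : ell k ^+ h != 0 by rewrite expf_neq0 // ell_neq0.
have g00 : g != 0 by apply: contra_eq_neq g0 => ->; rewrite horner0 eq_sym oner_neq0.
have := eqp_eq gq => /(congr1 (fun p => p.[0])).
rewrite !hornerZ g0 horner_exp ell0 // expr1n !mulr1 => el.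
have eg : g = ell k ^+ h.
  apply: (scalerI (a := lead_coef g)); first by rewrite lead_coef_eq0.
  by rewrite -{1}el eqp_eq.
by rewrite {2}eg size_ell_exp.
Qed.
Lemma prod_ell n k K (i : 'I_n) (gs : 'I_n -> {poly R}) : (0 < k)%N ->
  (forall a, (gs a).[0] = 1) -> \prod_(a | a != i) gs a = ell k ^+ K ->
  (forall a, a != i -> gs a = ell k ^+ (size (gs a)).-1) /\
  (\sum_(a | a != i) (size (gs a)).-1)%N = K.
Proof.
move=> k0 g0 hp.
have ha : forall a, a != i -> gs a = ell k ^+ (size (gs a)).-1.
  move=> a ai; apply: (dvd_ell (K := K)) => //.
  by rewrite -hp (bigD1 a) //= dvdp_mulIl.
split => //.
have : ell k ^+ (\sum_(a | a != i) (size (gs a)).-1)%N = ell k ^+ K.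
  rewrite -hp -prodrXr; apply: eq_bigr => a ai; exact/esym/ha.
by move=> e; have := congr1 (fun p : {poly R} => size p) e; rewrite !size_ell_exp // => -[].
Qed.
End Univ.

Section Multi.
Variable R : realType.
Variable n : nat.
Implicit Types (Q : {mpoly R[n]}).

Definition hv (i : 'I_n) : 'I_n -> {poly R} := fun j => if j == i then 'X else 0.
Definition res (i : 'I_n) Q : {poly R} := mmap (@polyC R) (hv i) Q.

Lemma res_horner i Q t : (res i Q).[t] = Q.@[axis_pt i t].
Proof.
rewrite /res /mmap mevalE horner_sum; apply: eq_bigr => m _.
rewrite hornerM hornerC /mmap1 horner_prod; congr (_ * _); apply: eq_bigr => j _.
by rewrite horner_exp /hv /axis_pt; case: eqP => _; rewrite ?hornerX ?horner0.
Qed.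

Lemma resX i a : res i 'X_a = hv i a.
Proof. by rewrite /res mmapX mmap1U. Qed.

Lemma resD i : {morph res i : x y / x + y}.
Proof. by move=> x y; rewrite /res mmapD. Qed.

Lemma resM i : {morph res i : x y / x * y}.
Proof. by move=> x y; rewrite /res rmorphM. Qed.

Lemma resB i : {morph res i : x y / x - y}.
Proof. by move=> x y; rewrite /res mmapB. Qed.

Lemma res0 i : res i 0 = 0.
Proof. by rewrite /res mmap0. Qed.

Lemma hvii i : hv i i = 'X.
Proof. by rewrite /hv eqxx. Qed.

Lemma mmap1_deriv i m :
  (mmap1 (hv i) m)^`() = (m i)%:R%:P * mmap1 (hv i) (m - U_(i))%MM.
Proof.
have zz : \prod_(j | j != i) hv i j ^+ (m - U_(i))%MM j = \prod_(j | j != i) hv i j ^+ m j.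
  by apply: eq_bigr => j ji; rewrite mnmBE mnm1E eq_sym (negPf ji) subn0.
have zc : \prod_(j | j != i) hv i j ^+ m j = (\prod_(j | j != i) (0 : R) ^+ m j)%:P.
  rewrite rmorph_prod; apply: eq_bigr => j ji; rewrite /hv (negPf ji) rmorphXn rmorph0 //.
rewrite /mmap1 (bigD1 i) //= [in RHS](bigD1 i) //= zz zc hvii.
rewrite derivM derivC mulr0 addr0 derivXn mnmBE mnm1E eqxx subn1.
by rewrite -mulr_natl polyC_natr mulrA.
Qed.
Lemma res_deriv i Q : res i (mderiv i Q) = (res i Q)^`().
Proof.
elim/mpolyind: Q => [|c m p _ _ IH]; first by rewrite mderiv0 res0 deriv0.
rewrite mderivD resD IH resD derivD; congr (_ + _).
rewrite mderivZ mderivX scalerA /res !mmapZ !mmapX.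
by rewrite rmorphM derivM /= derivC mul0r add0r mmap1_deriv mulrA polyC_natr.
Qed.
Lemma mmap1_0 i m : (mmap1 (hv i) m).[0] = (m == 0%MM)%:R.
Proof.
rewrite /mmap1 horner_prod.
case: eqP => [->|/eqP m0].
  by rewrite big1 // => j _; rewrite mnm0E expr0 hornerC.
have [j mj] : exists j, m j != 0%N.
  apply/existsP; apply: contraNT m0 => /existsPn h; apply/eqP/mnmP => j.
  by rewrite mnm0E; apply/eqP/negPn/h.
rewrite (bigD1 j) //= horner_exp /hv.
by case: eqP => _; rewrite ?hornerX ?horner0 expr0n (negPf mj) mul0r.
Qed.

Lemma res_horner0 i Q : (res i Q).[0] = Q@_0.
Proof.
rewrite /res /mmap horner_sum.
under eq_bigr => m _ do rewrite hornerM hornerC mmap1_0.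
case: (boolP (0%MM \in msupp Q)) => h0.
  rewrite (bigD1_seq 0%MM) //= ?msupp_uniq // eqxx mulr1 big1 ?addr0 //.
  by move=> m /negPf ->; rewrite mulr0.
rewrite big1_seq; first by rewrite (memN_msupp_eq0 h0).
by move=> m /andP[_ mQ]; case: eqP => [e0|]; [move: h0; rewrite -e0 mQ | rewrite mulr0].
Qed.
End Multi.

Lemma det_rowdiag (S : comRingType) m (A : 'M[S]_m) (i : 'I_m) :
  (forall a b, a != i -> a != b -> A a b = 0) -> \det A = \prod_a A a a.
Proof.
move=> hA; rewrite /determinant (bigD1 (1%g : 'S_m)) //= odd_perm1 expr0 mul1r [X in _ + X]big1 ?addr0.
  by apply: eq_bigr => a _; rewrite perm1.
move=> s s1.
have [a sa] : exists a, s a != a.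
  apply/existsP; apply: contraNT s1 => /existsPn h; apply/eqP/permP => x.
  by rewrite perm1; apply/eqP/negPn/h.
case: (eqVneq a i) => [ai|ai].
  subst a; have sj : s (s i) != s i.
    by apply: contra sa => /eqP /perm_inj ->.
  by rewrite (bigD1 (s i)) //= hA ?mul0r ?mulr0 // eq_sym.
by rewrite (bigD1 a) //= hA ?mul0r ?mulr0 // eq_sym.
Qed.

Lemma ell_deriv0 (R : numFieldType) k h : (0 < k)%N ->
  ((ell R k ^+ h)^`()).[0] = h%:R / k%:R.
Proof.
move=> k0; rewrite deriv_exp hornerMn hornerM horner_exp ell0 // expr1n mulr1.
rewrite /ell -mul_polyC derivM derivC mul0r add0r derivD derivX derivC addr0 mulr1 hornerC.
by rewrite -mulr_natr mulrC.
Qed.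


Unset Implicit Arguments. Set Strict Implicit.

Theorem lemma7 (R : realType) (n : nat) (P : {mpoly R[n]}) :
  (2 <= n)%N ->
  (forall m : 'X_{1..n}, m \in msupp P -> 0 < P@_m) ->
  (forall m : 'X_{1..n}, (mdeg m <= 1)%N -> P@_m = 1) ->
  (forall x : 'I_n -> R, P.@[x] != 0 ->
     (\det (lemma7_mx P)).@[x] / P.@[x] ^+ n.-1 = P.@[x] ^+ n) ->
  exists (k : 'I_n -> nat) (h : 'I_n -> 'I_n -> nat),
    [/\ forall i, (0 < k i)%N,
        forall i (t : R), P.@[axis_pt i t] = (1 + t / (k i)%:R) ^+ k i,
        forall i j (t : R), j != i ->
          (mderiv j P).@[axis_pt i t] = (1 + t / (k i)%:R) ^+ h i j,
        forall i, (\sum_(a < n | a != i) h i a)%N = (k i * (n - 2) + 2)%N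
      & forall i j, i != j ->
          (h i j)%:R / (k i)%:R = (h j i)%:R / (k j)%:R :> R].
Proof.
move=> n2 _ hc hdet.
have dP0 : forall a, (mderiv a P)@_0 = 1.
  by move=> a; rewrite mcoeff_deriv mnm0E add0m mulr1n hc // mdeg1.
have key : forall i : 'I_n,
   [/\ (0 < (size (res i P)).-1)%N,
       res i P = ell R (size (res i P)).-1 ^+ (size (res i P)).-1,
       forall a, a != i -> res i (mderiv a P) =
         ell R (size (res i P)).-1 ^+ (size (res i (mderiv a P))).-1
     & (\sum_(a | a != i) (size (res i (mderiv a P))).-1)%N =
         ((size (res i P)).-1 * (n - 2) + 2)%N].
  move=> i; set f := res i P.
  have f0 : f.[0] = 1 by rewrite res_horner0 hc // mdeg0.
  have f1 : f^`().[0] = 1 by rewrite -res_deriv res_horner0 dP0.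
  set gs := fun a => res i (mderiv a P).
  have gs0 : forall a, (gs a).[0] = 1 by move=> a; rewrite /gs res_horner0 dP0.
  set G := \prod_(a | a != i) gs a.
  have fnz : f != 0 by apply: contra_eq_neq f0 => ->; rewrite horner0 eq_sym oner_neq0.
  set Mx := lemma7_mx P.
  set Dd := res i (\det Mx).
  have hpt : forall t, f.[t] != 0 -> Dd.[t] = f.[t] ^+ (2 * n).-1.
    move=> t ft; have := hdet (axis_pt i t); rewrite -!res_horner -/f => /(_ ft) e.
    rewrite -[LHS](divfK (expf_neq0 n.-1 ft)) e -exprD; congr (_ ^+ _); lia.
  have HD : Dd = f ^+ (2 * n).-1.
    have H0 : (Dd - f ^+ (2 * n).-1) * f = 0.
      set H := _ * f.
      apply: (roots_geq_poly_eq0 (rs := [seq j%:R | j <- iota 0 (size H)])).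
      - apply/allP => x _; rewrite /root /H hornerM hornerD hornerN horner_exp.
        case: (eqVneq f.[x] 0) => [->|fx]; first by rewrite mulr0.
        by rewrite hpt // subrr mul0r.
      - by rewrite map_inj_uniq ?iota_uniq // => x y /eqP; rewrite eqr_nat => /eqP.
      - by rewrite size_map size_iota.
    by move: H0 => /eqP; rewrite mulf_eq0 (negPf fnz) orbF subr_eq0 => /eqP.
  have hdetA : Dd = \det (map_mx (res i) Mx).
    rewrite /Dd /res; exact/esym/det_map_mx.
  have off : forall a b, a != i -> a != b -> (map_mx (res i) Mx) a b = 0.
    move=> a b ai ab; rewrite !mxE resD resM resX /hv (negPf ai) mulr0 add0r (negPf ab) res0 //.
  have diag : forall a, (map_mx (res i) Mx) a a = if a == i then Dop f else f * gs a.
    move=> a; rewrite !mxE eqxx resD resM resX /hv; case: eqP => [->|_].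
      rewrite resB !resM !res_deriv -/f /Dop; ring.
    by rewrite mulr0 add0r resM.
  have hG : G * Dop f = f ^+ n.
    move: HD; rewrite hdetA (det_rowdiag off) (bigD1 i) //= diag eqxx.
    rewrite (eq_bigr (fun a => f * gs a)); last by move=> a ai; rewrite diag (negPf ai).
    rewrite big_split /= -/G prodr_const cardC1 card_ord.
    have -> : (2 * n).-1 = (n.-1 + n)%N by lia.
    rewrite exprD => e; apply: (mulfI (x := f ^+ n.-1)); first by rewrite expf_neq0.
    by rewrite -e; ring.
  have [k0 hf hGe] := univ_full n2 f0 f1 hG.
  have [hg hs] := prod_ell k0 gs0 hGe.
  by split.
exists (fun i => (size (res i P)).-1), (fun i a => (size (res i (mderiv a P))).-1).
split.
- by move=> i; have [] := key i.
- move=> i t; have [k0 hf _ _] := key i.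
  by rewrite -res_horner {1}hf horner_exp ell_horner.
- move=> i j t ji; have [k0 _ hg _] := key i.
  by rewrite -res_horner {1}(hg j ji) horner_exp ell_horner.
- by move=> i; have [] := key i.
have E : forall i j, i != j -> (size (res i (mderiv j P))).-1%:R / (size (res i P)).-1%:R
    = (mderiv i (mderiv j P))@_0 :> R.
  move=> i j ij; have [k0 _ hg _] := key i.
  rewrite -(@ell_deriv0 R _ (size (res i (mderiv j P))).-1 k0) -(hg j) 1?eq_sym //.
  by rewrite -res_deriv res_horner0.
move=> i j ij; rewrite E // E 1?eq_sym //; by rewrite mderiv_comm.
Qed.
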